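(* Let $\mathbf{L}$ be a lattice, $n\ge1$ an integer and $U$ an upset of $\mathbf{L}$. The following are equivalent: (i) for all $a_1,\dots,a_{n+1}\in U$ there are $i\neq j$ with $a_i\wedge a_j\in U$; (ii) $U$ is a union of at most $n$ filters of $\mathbf{L}$ (each contained in $U$); (iii) there is a lattice homomorphism $h\colon\mathbf{L}\to\mathbf{M}$ into some lattice $\mathbf{M}$ and an upset $V$ of $\mathbf{M}$ which is the upward closure of a set of at most $n$ elements, such that $U=h^{-1}[V]$.
   Context: A filter on a lattice is an upset closed under binary meets (the empty set and the whole lattice count as filters). *)

(* Defs.v *)
From mathcomp Require Import all_boot all_order.
Set Implicit Arguments. Unset Strict Implicit. Unset Printing Implicit Defensive.
Import Order.TTheory.
Local Open Scope order_scope.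

Definition upset (d : Order.disp_t) (L : latticeType d) (U : L -> Prop) : Prop :=
  forall x y : L, U x -> x <= y -> U y.

(* A filter: an upset closed under binary meets (empty set and whole lattice allowed). *)
Definition lfilter (d : Order.disp_t) (L : latticeType d) (F : L -> Prop) : Prop :=
  upset F /\ (forall x y : L, F x -> F y -> F (x `&` y)).

Definition lattice_hom (d d' : Order.disp_t) (L : latticeType d) (M : latticeType d')
  (h : L -> M) : Prop :=
  forall x y : L, h (x `&` y) = h x `&` h y /\ h (x `|` y) = h x `|` h y.

Definition upclosure (d : Order.disp_t) (M : latticeType d) (s : seq M) : M -> Prop :=
  fun y => exists2 b, b \in s & b <= y.

(* Main.v *)
Require Import Defs.
From HB Require Import structures.
From mathcomp Require Import all_boot all_order.
From mathcomp Require Import boolp.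
Set Implicit Arguments. Unset Strict Implicit.
Import Order.TTheory.
Local Open Scope order_scope.

Record filt (d : Order.disp_t) (L : latticeType d) :=
  Filt { fval : L -> Prop; fP : lfilter fval }.

HB.instance Definition _ d L := gen_eqMixin (@filt d L).
HB.instance Definition _ d L := gen_choiceMixin (@filt d L).

Section Filt.
Variables (d : Order.disp_t) (L : latticeType d).
Implicit Types F G H : filt L.

Lemma filt_ext F G : (forall x, fval F x <-> fval G x) -> F = G.
Proof.
case: F G => [f fp] [g gp] /= e.
have efg : f = g by apply: funext => x; apply: propext.
subst g; congr Filt; apply: Prop_irrelevance.
Qed.

Definition fle F G := `[< forall x, fval G x -> fval F x >].

Lemma fle_refl : reflexive fle.
Proof. by move=> F; apply/asboolP. Qed.
Lemma fle_anti : antisymmetric fle.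
Proof.
move=> F G /andP[/asboolP a /asboolP b]; apply: filt_ext => x; split; auto.
Qed.
Lemma fle_trans : transitive fle.
Proof. by move=> G F H /asboolP a /asboolP b; apply/asboolP; auto. Qed.

Definition filtDisp : Order.disp_t. Proof. exact: Order.Disp tt tt. Qed.

HB.instance Definition _ := Order.Le_isPOrder.Build filtDisp (filt L)
  fle_refl fle_anti fle_trans.

Definition genf F G (x : L) : Prop :=
  (exists f g, [/\ fval F f, fval G g & f `&` g <= x]) \/ fval F x \/ fval G x.

Lemma genf_filter F G : lfilter (genf F G).
Proof.
case: F G => [f [fu fm]] [g [gu gm]]; rewrite /genf /=; split.
  move=> x y [[a [b [fa gb ab]]]|[fx|gx]] xy.
  - by left; exists a, b; split=> //; apply: le_trans xy.
  - by right; left; apply: fu xy.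
  - by right; right; apply: gu xy.
move=> x y [[a [b [fa gb ab]]]|[fx|gx]] [[a' [b' [fa' gb' ab']]]|[fy|gy]].
- left; exists (a `&` a'), (b `&` b'); split; [exact: fm|exact: gm|].
  by rewrite meetACA; apply: leI2.
- left; exists (a `&` y), b; split; [exact: fm| exact: gb|].
  by rewrite meetAC; apply: leI2.
- left; exists a, (b `&` y); split; [exact: fa| exact: gm|].
  by rewrite meetA; apply: leI2.
- left; exists (x `&` a'), b'; split; [exact: fm| exact: gb'|].
  by rewrite -meetA; apply: leI2.
- by right; left; apply: fm.
- by left; exists x, y; split.
- left; exists a', (x `&` b'); split; [exact: fa'| exact: gm|].
  by rewrite meetCA; apply: leI2.
- by left; exists y, x; split => //; rewrite meetC.
- by right; right; apply: gm.
Qed.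

Definition fmeet F G := Filt (genf_filter F G).

Lemma int_filter F G : lfilter (fun x => fval F x /\ fval G x).
Proof.
case: F G => [f [fu fm]] [g [gu gm]] /=; split.
  by move=> x y [fx gx] xy; split; [apply: fu xy|apply: gu xy].
by move=> x y [fx gx] [fy gy]; split; [apply: fm|apply: gm].
Qed.

Definition fjoin F G := Filt (int_filter F G).

Lemma fmeetP F G H : (F <= fmeet G H) = (F <= G) && (F <= H).
Proof.
apply/idP/andP.
  move=> /asboolP a; split; apply/asboolP => x hx; apply: a; rewrite /= /genf; auto.
move=> [/asboolP a /asboolP b]; apply/asboolP => x.
case: F a b => [f [fu fm]] /= a b [[p [q [gp hq pq]]]|[gx|hx]]; auto.
by apply: fu pq; apply: fm; auto.
Qed.

Lemma fjoinP F G H : (fjoin F G <= H) = (F <= H) && (G <= H).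
Proof.
apply/idP/andP.
  by move=> /asboolP a; split; apply/asboolP => x hx; have [] := a x hx.
by move=> [/asboolP a /asboolP b]; apply/asboolP => x hx; split; auto.
Qed.

HB.instance Definition _ := Order.POrder_MeetJoin_isLattice.Build filtDisp (filt L)
  fmeetP fjoinP.

Lemma principal_filter (x : L) : lfilter (fun y => x <= y).
Proof.
split; first by move=> a b xa ab; apply: le_trans ab.
by move=> a b xa xb; rewrite lexI xa.
Qed.

Definition hp (x : L) : filt L := Filt (principal_filter x).

Lemma hp_hom : lattice_hom hp.
Proof.
move=> x y; split; apply: filt_ext => z /=.
  rewrite /genf /=; split.
    by move=> h; left; exists x, y; split.
  move=> [[a [b [xa yb ab]]]|[xz|yz]].
  - by apply: le_trans ab; apply: leI2.
  - by apply: le_trans xz; apply: leIl.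
  - by apply: le_trans yz; apply: leIr.
by rewrite leUx; split => /andP.
Qed.

End Filt.

Lemma p2p3 (d : Order.disp_t) (L : latticeType d) (n : nat)
  (U : L -> Prop) :
  (exists F : 'I_n -> (L -> Prop),
              (forall k, lfilter (F k)) /\ (forall x, U x <-> exists k, F k x)) ->
  exists (d' : Order.disp_t) (M : latticeType d') (h : L -> M),
              lattice_hom h /\
              exists s : seq M, (size s <= n)%N /\
                (forall x, U x <-> upclosure s (h x)).
Proof.
move=> [F [hF hUF]].
exists filtDisp, (filt L), (@hp _ L); split; first exact: hp_hom.
exists [seq Filt (hF k) | k <- enum 'I_n]; split.
  by rewrite size_map size_enum_ord.
move=> x; rewrite hUF; split.
  move=> [k Fk]; exists (Filt (hF k)); first by apply: map_f; rewrite mem_enum.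
  apply/asboolP => y /= xy; have [fu _] := hF k; exact: fu Fk xy.
move=> [b /mapP [k _ ->] /asboolP bx]; exists k; exact: (bx x (lexx x)).
Qed.
Section P12.
Variables (d : Order.disp_t) (L : latticeType d) (U : L -> Prop) (hU : upset U).

Definition indep (s : seq L) := uniq s /\ (forall x, x \in s -> U x) /\
  (forall x y, x \in s -> y \in s -> U (x `&` y) -> x = y).

Lemma indep_bound n :
  (forall a : 'I_n.+1 -> L, (forall i, U (a i)) ->
              exists i j : 'I_n.+1, i != j /\ U (a i `&` a j)) ->
  forall t, indep t -> (size t <= n)%N.
Proof.
move=> P1 t [ut [Ut pt]]; rewrite leqNgt; apply/negP => lt.
case: t lt ut Ut pt => [//|x0 t'] lt ut Ut pt.
set t := x0 :: t' in lt ut Ut pt.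
have hi : forall i : 'I_n.+1, (i < size t)%N.
  by move=> i; apply: leq_trans lt; rewrite ltnS -ltnS.
have [i [j [ij Uij]]] := P1 (fun i => nth x0 t i) (fun i => Ut _ (mem_nth _ (hi i))).
have := pt _ _ (mem_nth _ (hi i)) (mem_nth _ (hi j)) Uij.
move/eqP; rewrite nth_uniq // => /eqP eij.
move: ij; have -> : i = j by apply: val_inj.
by rewrite eqxx.
Qed.

Lemma indep_max k : (forall t, indep t -> (size t <= k)%N) ->
  exists s, indep s /\ forall t, indep t -> (size t <= size s)%N.
Proof.
elim: k => [|k IH] B.
  exists [::]; split; first by split=> //; split.
  by move=> t /B.
case: (pselect (exists t, indep t /\ size t = k.+1)) => [[t [it st]]|no].
  by exists t; split=> // t' /B; rewrite st.
apply: IH => t it; have := B t it; rewrite leq_eqVlt ltnS => /orP[/eqP e|//].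
by exfalso; apply: no; exists t.
Qed.

Variable s : seq L.
Hypothesis iss : indep s.
Hypothesis ms : forall t, indep t -> (size t <= size s)%N.

Lemma my_cover x : U x -> exists2 y, y \in s & U (x `&` y).
Proof.
move=> Ux; case: (pselect (exists2 y, y \in s & U (x `&` y))) => // no.
have [us [Us ps]] := iss.
have xs : x \notin s.
  by apply/negP => xs; apply: no; exists x => //; rewrite meetxx.
have : indep (x :: s).
  split; first by rewrite /= xs us.
  split; first by move=> y; rewrite in_cons => /orP[/eqP->|/Us].
  move=> y z; rewrite !in_cons => /orP[/eqP->|ys] /orP[/eqP->|zs] //.
  - by move=> U'; exfalso; apply: no; exists z.
  - by rewrite meetC => U'; exfalso; apply: no; exists y.
  - exact: ps.
by move/ms; rewrite /= ltnn.
Qed.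

Lemma meetF a x y : a \in s -> U (x `&` a) -> U (y `&` a) -> U ((x `&` y) `&` a).
Proof.
move=> as_ Ux Uy; case: (pselect (U ((x `&` y) `&` a))) => // no.
have [us [Us ps]] := iss.
set p := x `&` a; set q := y `&` a.
have pa : p <= a by exact: leIr.
have qa : q <= a by exact: leIr.
have nopq : ~ U (p `&` q).
  by rewrite /p /q meetACA meetxx.
have remP b : b \in rem a s -> b \in s /\ b != a.
  by rewrite (mem_rem_uniq _ us) inE => /andP[].
have star c b : c <= a -> b \in rem a s -> ~ U (c `&` b).
  move=> ca /remP [bs ba] Ucb.
  have : U (a `&` b) := hU Ucb (leI2 ca (lexx b)).
  by move/(ps _ _ as_ bs) => e; move: ba; rewrite e eqxx.
have pq : p != q by apply/negP => /eqP e; apply: nopq; rewrite -e meetxx.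
have pr : p \notin rem a s.
  by apply/negP => pr; apply: (star p p pa pr); rewrite meetxx.
have qr : q \notin rem a s.
  by apply/negP => qr; apply: (star q q qa qr); rewrite meetxx.
have : indep [:: p, q & rem a s].
  split; first by rewrite /= in_cons negb_or pq pr qr rem_uniq.
  split.
    move=> z; rewrite !in_cons => /orP[/eqP->//|/orP[/eqP->//|/remP[/Us]//]].
  move=> u v; rewrite !in_cons => /orP[/eqP->|/orP[/eqP->|ur]]
     /orP[/eqP->|/orP[/eqP->|vr]] //.
  - by move/(star _ _ pa vr).
  - by rewrite meetC.
  - by move/(star _ _ qa vr).
  - by rewrite meetC => /(star _ _ pa ur).
  - by rewrite meetC => /(star _ _ qa ur).
  - by have [us' _] := remP _ ur; have [vs' _] := remP _ vr; apply: ps.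
move/ms; rewrite /= size_rem //.
have sz : (0 < size s)%N by case: (s) as_.
by rewrite prednK // ltnn.
Qed.

End P12.
Lemma p1p2 (d : Order.disp_t) (L : latticeType d) (n : nat)
  (U : L -> Prop) (hU : upset U) :
  (forall a : 'I_n.+1 -> L, (forall i, U (a i)) ->
              exists i j : 'I_n.+1, i != j /\ U (a i `&` a j)) ->
  exists F : 'I_n -> (L -> Prop),
              (forall k, lfilter (F k)) /\ (forall x, U x <-> exists k, F k x).
Proof.
move=> P1.
have B := indep_bound P1.
have [s [iss ms]] := indep_max (B).
have sn : (size s <= n)%N := B _ iss.
have cov := my_cover iss ms.
case: s iss ms sn cov => [|x0 s'] iss ms sn cov.
  exists (fun _ _ => False); split.
    by move=> k; split.
  move=> x; split; last by case.
  by move/cov => [y].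
set s := x0 :: s' in iss ms sn cov *.
exists (fun (k : 'I_n) x => (k < size s)%N /\ U (x `&` nth x0 s k)); split.
  move=> k; split.
    move=> x y [ks Ux] xy; split => //.
    exact: hU _ _ Ux (leI2 xy (lexx _)).
  move=> x y [ks Ux] [_ Uy]; split => //.
  exact: (meetF hU iss ms (mem_nth _ ks) Ux Uy).
move=> x; split.
  move/cov => [y ys Uxy].
  have ki : (index y s < n)%N by apply: leq_trans sn; rewrite index_mem.
  have ys' : (index y s < size s)%N by rewrite index_mem.
  exists (Ordinal ki); split; [exact: ys' | by rewrite nth_index].
move=> [k [_ Ux]]; exact: hU _ _ Ux (leIl _ _).
Qed.

Lemma p2p1 (d : Order.disp_t) (L : latticeType d) (n : nat)
  (U : L -> Prop) :
  (exists F : 'I_n -> (L -> Prop),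
              (forall k, lfilter (F k)) /\ (forall x, U x <-> exists k, F k x)) ->
  (forall a : 'I_n.+1 -> L, (forall i, U (a i)) ->
              exists i j : 'I_n.+1, i != j /\ U (a i `&` a j)).
Proof.
move=> [F [hF hUF]] a Ua.
have H i : exists k, F k (a i) by apply/hUF.
pose g i := proj1_sig (cid (H i)).
have gP i : F (g i) (a i) := proj2_sig (cid (H i)).
have : ~~ injectiveb g.
  apply/negP => /injectiveP inj.
  by have := leq_card g inj; rewrite !card_ord ltnn.
move/injectivePn => [i [j ij gij]].
exists i, j; split => //; apply/hUF; exists (g i).
have [_ hm] := hF (g i); apply: hm => //; rewrite gij; exact: gP.
Qed.

Lemma hom_mono (d d' : Order.disp_t) (L : latticeType d) (M : latticeType d')
  (h : L -> M) : lattice_hom h -> forall x y, x <= y -> h x <= h y.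
Proof.
move=> hh x y /meet_idPl e; have [hm _] := hh x y.
by rewrite -e hm leIr.
Qed.

Lemma p3p2 (d : Order.disp_t) (L : latticeType d) (n : nat)
  (U : L -> Prop) :
  (exists (d' : Order.disp_t) (M : latticeType d') (h : L -> M),
              lattice_hom h /\
              exists s : seq M, (size s <= n)%N /\
                (forall x, U x <-> upclosure s (h x))) ->
  exists F : 'I_n -> (L -> Prop),
              (forall k, lfilter (F k)) /\ (forall x, U x <-> exists k, F k x).
Proof.
move=> [d' [M [h [hh [s [sn hs]]]]]].
exists (fun (k : 'I_n) x => exists b, [/\ (k < size s)%N, b = nth b s k & b <= h x]).
split.
  move=> k; split.
    move=> x y [b [ks e bx]] xy; exists b; split => //.
    exact: (le_trans bx (hom_mono hh xy)).
  move=> x y [b [ks e bx]] [b' [_ e' by']].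
  have bb : b' = b by rewrite e' e; apply: set_nth_default.
  exists b; split => //; have [-> _] := hh x y; rewrite lexI bx -bb by' //.
move=> x; split.
  move/hs => [b bs bx].
  have ki : (index b s < n)%N by apply: leq_trans sn; rewrite index_mem.
  have bs' : (index b s < size s)%N by rewrite index_mem.
  exists (Ordinal ki); exists b; split; [exact: bs' | by rewrite nth_index | by []].
move=> [k [b [ks e bx]]]; apply/hs; exists b => //.
by rewrite e; apply: mem_nth.
Qed.

Theorem mainTheorem4 (d : Order.disp_t) (L : latticeType d) (n : nat) (hn : (1 <= n)%N)
  (U : L -> Prop) (hU : upset U) :
  let P1 := forall a : 'I_n.+1 -> L, (forall i, U (a i)) ->
              exists i j : 'I_n.+1, i != j /\ U (a i `&` a j) in
  let P2 := exists F : 'I_n -> (L -> Prop),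
              (forall k, lfilter (F k)) /\ (forall x, U x <-> exists k, F k x) in
  let P3 := exists (d' : Order.disp_t) (M : latticeType d') (h : L -> M),
              lattice_hom h /\
              exists s : seq M, (size s <= n)%N /\
                (forall x, U x <-> upclosure s (h x)) in
  (P1 <-> P2) /\ (P2 <-> P3).
Proof.
move=> P1 P2 P3; split; split.
- exact: p1p2.
- exact: p2p1.
- exact: p2p3.
- exact: p3p2.
Qed.
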